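(* Let $X$ be an exponential vector space over a field $K$, let $B$ be a basis of $X\smallsetminus X_0$ and let $x\in B$. Then for every $y\in X\smallsetminus X_0$ with $y\leq x$, the set $(B\smallsetminus\{x\})\cup\{y\}$ is also a basis of $X\smallsetminus X_0$.
   Context: An exponential vector space (evs) over a field $K$ is a partially ordered set $(X,\leq)$ with a binary operation $+$ on $X$ and a map $K\times X\to X$, $(\alpha,x)\mapsto \alpha x$, such that: (A1) $(X,+)$ is a commutative semigroup with identity $\theta$; (A2) $x\leq y$ implies $x+z\leq y+z$ and $\alpha x\leq \alpha y$ for all $z\in X$, $\alpha\in K$; (A3) $\alpha(x+y)=\alpha x+\alpha y$, $\alpha(\beta x)=(\alpha\beta)x$, $(\alpha+\beta)x\leq \alpha x+\beta x$, $1x=x$; (A4) $\alpha x=\theta$ iff $\alpha=0$ or $x=\theta$; (A5) $x+(-1)x=\theta$ iff $x\in X_0$, where $X_0:=\{z\in X: y\not\leq z \text{ for all } y\in X\smallsetminus\{z\}\}$ (the set of minimal elements, called the primitive space; it is a vector space over $K$); (A6) for each $x\in X$ there is $p\in X_0$ with $p\leq x$. For $x\in X\smallsetminus X_0$ let $L(x):=\{z\in X: z\geq \alpha x+p \text{ for some } \alpha\in K\smallsetminus\{0\},\ p\in X_0\}$. A subset $B\subseteq X\smallsetminus X_0$ generates $X\smallsetminus X_0$ if $X\smallsetminus X_0=\bigcup_{b\in B}L(b)$. Elements $x,y\in X\smallsetminus X_0$ are orderly dependent if $x\in L(y)$ or $y\in L(x)$, and orderly independent otherwise; $B\subseteq X\smallsetminus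 X_0$ is orderly independent if any two distinct members of $B$ are orderly independent. A basis of $X\smallsetminus X_0$ is an orderly independent subset of $X\smallsetminus X_0$ that generates $X\smallsetminus X_0$. *)

(* Defs.v *)
From mathcomp Require Import all_boot all_algebra.
Set Implicit Arguments. Unset Strict Implicit. Unset Printing Implicit Defensive.
Import GRing.Theory.
Local Open Scope ring_scope.

Section EVS.
Variables (K : fieldType) (X : Type) (le : X -> X -> Prop)
  (add : X -> X -> X) (sc : K -> X -> X) (th : X).

(* X_0 : the minimal elements (primitive space) *)
Definition primitive (z : X) : Prop := forall y : X, y <> z -> ~ le y z.

Record is_evs : Prop := {
  evs_refl : forall x, le x x;
  evs_antisym : forall x y, le x y -> le y x -> x = y;
  evs_trans : forall x y z, le x y -> le y z -> le x z;
  evs_addA : forall x y z, add x (add y z) = add (add x y) z;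
  evs_addC : forall x y, add x y = add y x;
  evs_add0 : forall x, add th x = x;
  evs_le_add : forall x y z, le x y -> le (add x z) (add y z);
  evs_le_sc : forall (a : K) x y, le x y -> le (sc a x) (sc a y);
  evs_scD : forall (a : K) x y, sc a (add x y) = add (sc a x) (sc a y);
  evs_scA : forall (a b : K) x, sc a (sc b x) = sc (a * b) x;
  evs_scDl : forall (a b : K) x, le (sc (a + b) x) (add (sc a x) (sc b x));
  evs_sc1 : forall x, sc 1 x = x;
  evs_sc_eq0 : forall (a : K) x, sc a x = th <-> (a = 0 \/ x = th);
  evs_A5 : forall x, add x (sc (-1) x) = th <-> primitive x;
  evs_A6 : forall x, exists p, primitive p /\ le p x
}.

Definition Lset (x z : X) : Prop :=
  exists (a : K) (p : X), a <> 0 /\ primitive p /\ le (add (sc a x) p) z.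

Definition generates (B : X -> Prop) : Prop :=
  (forall b, B b -> ~ primitive b) /\
  (forall z, ~ primitive z <-> exists b, B b /\ Lset b z).

Definition orderly_dependent (x y : X) : Prop := Lset y x \/ Lset x y.

Definition orderly_independent_set (B : X -> Prop) : Prop :=
  (forall b, B b -> ~ primitive b) /\
  (forall x y, B x -> B y -> x <> y -> ~ orderly_dependent x y).

Definition basis (B : X -> Prop) : Prop :=
  orderly_independent_set B /\ generates B.

End EVS.

(* Main.v *)
Require Import Defs.
From mathcomp Require Import all_boot all_algebra.
From Stdlib Require Import Classical.
Import GRing.Theory.
Local Open Scope ring_scope.
Set Implicit Arguments. Unset Strict Implicit.

Section Aux.
Variables (K : fieldType) (X : Type) (le : X -> X -> Prop)
  (add : X -> X -> X) (sc : K -> X -> X) (th : X).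
Hypothesis H : is_evs le add sc th.

Lemma prim_sc a q : primitive le q -> primitive le (sc a q).
Proof.
move=> Pq; apply/(evs_A5 H).
have E : sc (-1) (sc a q) = sc a (sc (-1) q).
  by rewrite !(evs_scA H) mulrC.
rewrite E -(evs_scD H) ((proj2 (evs_A5 H q)) Pq).
by apply/(evs_sc_eq0 H); right.
Qed.

Lemma prim_add p q : primitive le p -> primitive le q -> primitive le (add p q).
Proof.
move=> Pp Pq; apply/(evs_A5 H).
rewrite (evs_scD H).
have -> : add (add p q) (add (sc (-1) p) (sc (-1) q)) =
          add (add p (sc (-1) p)) (add q (sc (-1) q)).
  rewrite -!(evs_addA H); congr (add p _).
  rewrite !(evs_addA H); congr (add _ _); exact: (evs_addC H).
rewrite ((proj2 (evs_A5 H p)) Pp) ((proj2 (evs_A5 H q)) Pq).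
exact: (evs_add0 H).
Qed.

Lemma Lset_le b u z : Lset le add sc b u -> le u z -> Lset le add sc b z.
Proof.
move=> [a [p [a0 [Pp Lp]]]] uz; exists a, p; split=> //; split=> //.
exact: (evs_trans H Lp uz).
Qed.

Lemma Lset_trans b u z : Lset le add sc b u -> Lset le add sc u z -> Lset le add sc b z.
Proof.
move=> [b' [q [b0 [Pq Lq]]]] [a [p [a0 [Pp Lp]]]].
exists (a * b'), (add (sc a q) p); split; first by apply/eqP; rewrite mulf_neq0 //; apply/eqP.
split.
  by apply: prim_add => //; apply: prim_sc.
apply: (evs_trans H) Lp.
have L1 := evs_le_add H p (evs_le_sc H a Lq).
rewrite (evs_scD H) (evs_scA H) -(evs_addA H) in L1 *.
exact: L1.
Qed.

End Aux.


Theorem mainTheorem4 (K : fieldType) (X : Type) (le : X -> X -> Prop)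
  (add : X -> X -> X) (sc : K -> X -> X) (th : X) :
  is_evs le add sc th ->
  forall (B : X -> Prop), basis le add sc B ->
  forall x : X, B x ->
  forall y : X, ~ primitive le y -> le y x ->
  basis le add sc (fun z => (B z /\ z <> x) \/ z = y).
Proof.
move=> H B [[Bnp Bind] [_ Bgen]] x Bx y ny yx.
have Lxy : Lset le add sc x y.
  have [b [Bb Lb]] := proj1 (Bgen y) ny.
  have [bx|bx] := (classic (b = x)); first by rewrite -bx.
  exfalso; apply: (Bind b x Bb Bx bx); right; exact: (Lset_le H Lb yx).
have np : forall b, (B b /\ b <> x) \/ b = y -> ~ primitive le b.
  by move=> w [[Bw _]|->]; [apply: Bnp|].
split; split=> //.
- move=> u v Hu Hv uv.
  have key : forall w, B w -> w <> x -> w <> y -> ~ orderly_dependent le add sc w y.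
    move=> w Bw wx wy [Lyw|Lwy].
    + apply: (Bind x w Bx Bw (nesym wx)); right; exact: (Lset_trans H Lxy Lyw).
    + apply: (Bind w x Bw Bx wx); right; exact: (Lset_le H Lwy yx).
  case: Hu Hv uv => [[Bu ux]|->] [[Bv vx]|->] uv.
  + exact: Bind.
  + exact: (key u Bu ux uv).
  + move=> [D|D]; apply: (key v Bv vx (nesym uv)); [right|left]; exact: D.
  + by case: uv.
- move=> z; split.
  + move=> nz; have [b [Bb Lb]] := proj1 (Bgen z) nz.
    have [bx|bx] := (classic (b = x)).
    * exists y; split; first by right.
      move: Lb; rewrite bx => -[a [p [a0 [Pp Lp]]]].
      exists a, p; split=> //; split=> //.
      apply: (evs_trans H) Lp; apply: (evs_le_add H); exact: (evs_le_sc H).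
    * by exists b; split=> //; left.
  + move=> [b [[[Bb _]|->] Lb]]; apply/(Bgen z).
    * by exists b.
    * exists x; split=> //; exact: (Lset_trans H Lxy Lb).
Qed.
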